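(* Let $H$ be a finite-dimensional real or complex Hilbert space with inner product $(\cdot,\cdot)$ and norm $\|u\|=(u,u)^{1/2}$, and let $A:H\to H$ be a self-adjoint operator with eigenvalues $0<\lambda_1\le\lambda_2\le\dots\le\lambda_K$, so that $A\ge \delta I$ with $\delta=\lambda_1>0$. Let $f$ be a real function defined and nonzero on $[\lambda_1,\lambda_K]$ with $f(\lambda_k)>0$ for all $k$, and write $f^{-1}(\lambda)=1/f(\lambda)$. For $\varphi\in H$ let $u=f^{-1}(A)\varphi$ be the solution of $f(A)u=\varphi$. Let $m\ge1$ and let $a_i>0$, $b_i>0$, $i=1,\dots,m$, be such that the function $r(\lambda)=\sum_{i=1}^m a_i e^{-b_i\lambda}$ satisfies $$|r(\lambda)-f^{-1}(\lambda)|\le\varepsilon\quad\text{for all }\lambda\in[\lambda_1,\lambda_K].$$ Let $T=\max_{1\le i\le m}b_i$, let $w:[0,T]\to H$ be the solution of the Cauchy problem $$\frac{dw}{dt}+(A-\delta I)w=0,\quad 0<t\le T,\qquad w(0)=\varphi,$$ and let $\tilde w:[0,T]\to H$ be any function satisfying $\|\tilde w(t)-w(t)\|\le\varepsilon_0\|\varphi\|$ for $0<t\le T$, for some $\varepsilon_0\ge0$. Define $$\hat u=\sum_{i=1}^m a_i e^{-b_i\delta}\,\tilde w(b_i).$$ Then $$\|\hat u-u\|\le\big(\varepsilon+\varepsilon_0\,(f^{-1}(\delta)+\varepsilon)\big)\|\varphi\|.$$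
   Context: Operator functions are defined spectrally: if $\psi_k$ ($\|\psi_k\|=1$) are orthonormal eigenvectors of $A$ with $A\psi_k=\lambda_k\psi_k$, then $g(A)u=\sum_{k=1}^K g(\lambda_k)(u,\psi_k)\psi_k$. In particular $f^{-1}(A)=\sum_k f(\lambda_k)^{-1}(\cdot,\psi_k)\psi_k$, and $f^{-1}(\delta)=1/f(\lambda_1)$. *)

(* Defs.v *)
From HB Require Import structures.
From mathcomp Require Import all_boot all_order all_algebra.
From mathcomp Require Import all_classical all_reals all_analysis.
From mathcomp Require Import complex.

Set Implicit Arguments.
Unset Strict Implicit.
Unset Printing Implicit Defensive.
Import Order.TTheory GRing.Theory Num.Theory.
Import numFieldNormedType.Exports.
Local Open Scope classical_set_scope.
Local Open Scope ring_scope.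

Section RealH.
Variables (R : realType) (n : nat).

Definition dotR (u v : 'cV[R]_n) : R := \sum_(i < n) u i 0 * v i 0.
Definition normR (u : 'cV[R]_n) : R := Num.sqrt (dotR u u).

Definition orthonormalR (psi : 'I_n -> 'cV[R]_n) : Prop :=
  forall j k, dotR (psi j) (psi k) = (j == k)%:R.

Definition selfadjointR (A : 'M[R]_n) : Prop := A^T = A.

(* spectral operator function g(A)u = sum_k g(lam_k) (u,psi_k) psi_k *)
Definition specR (g : R -> R) (lam : 'I_n -> R) (psi : 'I_n -> 'cV[R]_n)
  (u : 'cV[R]_n) : 'cV[R]_n :=
  \sum_(k < n) (g (lam k) * dotR u (psi k)) *: psi k.

Definition cauchy_solR (A : 'M[R]_n) (delta T : R) (phi : 'cV[R]_n)
  (w : R -> 'cV[R]_n) : Prop :=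
  w 0 = phi /\
  (forall i : 'I_n, {within `[0, T], continuous (fun t : R => w t i 0)}) /\
  (forall t, 0 < t < T -> forall i : 'I_n,
     is_derive t 1 (fun s => w s i 0) (- ((A - delta%:M) *m w t) i 0)).
End RealH.

Section ComplexH.
Variables (R : realType) (n : nat).
Local Notation C := (R[i]).

Definition dotC (u v : 'cV[C]_n) : C := \sum_(i < n) u i 0 * conjc (v i 0).
Definition normC (u : 'cV[C]_n) : R := Num.sqrt (complex.Re (dotC u u)).

Definition orthonormalC (psi : 'I_n -> 'cV[C]_n) : Prop :=
  forall j k, dotC (psi j) (psi k) = (j == k)%:R.

Definition selfadjointC (A : 'M[C]_n) : Prop := map_mx conjc A^T = A.

Definition specC (g : R -> R) (lam : 'I_n -> R) (psi : 'I_n -> 'cV[C]_n)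
  (u : 'cV[C]_n) : 'cV[C]_n :=
  \sum_(k < n) ((Complex (g (lam k)) 0) * dotC u (psi k)) *: psi k.

(* derivative of an H-valued function of a real variable, taken on the
   real and imaginary parts of each coordinate *)
Definition cauchy_solC (A : 'M[C]_n) (delta T : R) (phi : 'cV[C]_n)
  (w : R -> 'cV[C]_n) : Prop :=
  w 0 = phi /\
  (forall i : 'I_n, {within `[0, T], continuous (fun t : R => complex.Re (w t i 0))}) /\
  (forall i : 'I_n, {within `[0, T], continuous (fun t : R => complex.Im (w t i 0))}) /\
  (forall t, 0 < t < T -> forall i : 'I_n,
     is_derive t 1 (fun s => complex.Re (w s i 0))
       (complex.Re (- ((A - (Complex delta 0)%:M) *m w t) i 0)) /\
     is_derive t 1 (fun s => complex.Im (w s i 0))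
       (complex.Im (- ((A - (Complex delta 0)%:M) *m w t) i 0))).
End ComplexH.

Definition rexp (R : realType) (m : nat) (a b : 'I_m -> R) (x : R) : R :=
  \sum_(i < m) a i * expR (- (b i * x)).

Definition maxb (R : realType) (m : nat) (b : 'I_m -> R) : R :=
  \big[Num.max/0]_(i < m) b i.

(* Main.v *)
Require Import Defs.
From HB Require Import structures.
From mathcomp Require Import all_boot all_order all_algebra.
From mathcomp Require Import all_classical all_reals all_analysis.
From mathcomp Require Import complex.
From mathcomp Require Import ring lra.
Import Order.TTheory GRing.Theory Num.Theory.
Import numFieldNormedType.Exports.
Local Open Scope classical_set_scope.
Local Open Scope ring_scope.

Set Implicit Arguments.
Unset Strict Implicit.

Lemma within_continuousM (R : realType) (A : set R) (f g : R -> R) :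
  {within A, continuous f} -> {within A, continuous g} ->
  {within A, continuous (f \* g)}.
Proof. by move=> cf cg x; apply: cvgM; [exact: cf|exact: cg]. Qed.

Lemma within_continuous_cst (R : realType) (A : set R) (c : R) :
  {within A, continuous (fun _ => c)}.
Proof. by move=> x; apply: cvg_cst. Qed.

Lemma within_continuous_sum (R : realType) (A : set R) n (f : 'I_n -> R -> R) :
  (forall i, {within A, continuous (f i)}) ->
  {within A, continuous (fun t => \sum_(i < n) f i t)}.
Proof.
move=> cf; rewrite -fct_sumE.
apply: (big_ind (fun g => {within A, continuous g})) => //.
- exact: within_continuous_cst.
- by move=> g1 g2; apply: within_continuousD.
Qed.

Lemma ode_uniq (R : realType) (h : R -> R) (mu T : R) :
  {within `[0, T], continuous h} ->
  (forall t, 0 < t < T -> is_derive t 1 h (- (mu * h t))) ->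
  forall t, 0 <= t <= T -> h t = expR (- (mu * t)) * h 0.
Proof.
move=> hc hd t /andP[t0 tT].
have [->|tpos] := eqVneq t 0; first by rewrite mulr0 oppr0 expR0 mul1r.
have {tpos} tpos : 0 < t by rewrite lt_neqAle eq_sym tpos.
pose g := fun s => h s * expR (mu * s).
have gd : forall x, x \in `]0, t[ -> is_derive x 1 g 0.
  move=> x; rewrite in_itv /= => /andP[x0 xt].
  have hx := hd x (ltac:(by rewrite x0 (lt_le_trans xt tT))).
  have ex : is_derive x 1 (fun s => expR (mu * s)) (expR (mu * x) * mu).
    have e1 := is_derive_expR (mu * x).
    have e2 : is_derive x 1 (fun s => mu * s) mu.
      apply: is_derive_eq. by rewrite -[RHS]mulr1.
    exact: (is_derive1_comp e1 e2).
  have := is_deriveM hx ex.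
  move=> H.
  suff E : h x *: (expR (mu * x) * mu) + expR (mu * x) *: - (mu * h x) = 0.
    by rewrite -E.
  change (h x * (expR (mu * x) * mu) + expR (mu * x) * - (mu * h x) = 0).
  ring.
have gc : {within `[0, t], continuous g}.
  apply: within_continuousM.
    apply: continuous_subspaceW hc => y /=; rewrite !in_itv /= => /andP[-> yt].
    exact: le_trans yt tT.
  apply: continuous_subspaceT => y.
  apply: continuous_comp; last exact: continuous_expR.
  by apply: continuousM; [exact: cvg_cst | exact: cvg_id].
have [c _] := MVT tpos gd gc.
rewrite mul0r => /eqP; rewrite subr_eq0 /g mulr0 expR0 mulr1 => /eqP <-.
by rewrite mulrCA -expRD addNr expR0 mulr1.
Qed.


Lemma quad_bound (R : realType) (P Q B : R) : 0 <= P -> 0 <= Q ->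
  (forall s t, 0 <= P * s ^+ 2 + 2 * B * s * t + Q * t ^+ 2) ->
  B <= Num.sqrt P * Num.sqrt Q.
Proof.
move=> P0 Q0 H.
set p := Num.sqrt P; set q := Num.sqrt Q.
have p0 : 0 <= p by apply: sqrtr_ge0.
have q0 : 0 <= q by apply: sqrtr_ge0.
have Pp : P = p ^+ 2 by rewrite sqr_sqrtr.
have Qq : Q = q ^+ 2 by rewrite sqr_sqrtr.
have h1 := H q (- p).
rewrite Pp Qq in H h1.
have [pq0|] := ltP 0 (p * q); first by nra.
move=> pqle; have pq0 : p * q = 0 by apply/eqP; rewrite eq_le pqle mulr_ge0.
rewrite pq0; rewrite leNgt; apply/negP => Bpos.
move/eqP: pq0; rewrite mulf_eq0 => /orP[/eqP p00|/eqP q00].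
- have := H (- (q ^+ 2 + 1)) (2 * B); rewrite p00; nra.
- have := H (2 * B) (- (p ^+ 2 + 1)); rewrite q00; nra.
Qed.

Lemma mink (R : realType) (P Q B : R) : 0 <= P -> 0 <= Q ->
  (forall s t, 0 <= P * s ^+ 2 + 2 * B * s * t + Q * t ^+ 2) ->
  Num.sqrt (P + 2 * B + Q) <= Num.sqrt P + Num.sqrt Q.
Proof.
move=> P0 Q0 H.
have hb := @quad_bound R P Q B P0 Q0 H.
have p0 := sqrtr_ge0 P; have q0 := sqrtr_ge0 Q.
rewrite -(ger0_norm (addr_ge0 p0 q0)) -sqrtr_sqr ler_wsqrtr //.
rewrite sqrrD !sqr_sqrtr //; lra.
Qed.

Section RealLemmas.
Variables (R : realType) (n : nat).
Implicit Types (u v x y : 'cV[R]_n).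

Lemma dotRC u v : dotR u v = dotR v u.
Proof. by apply: eq_bigr => i _; rewrite mulrC. Qed.

Lemma dotRDl x y v : dotR (x + y) v = dotR x v + dotR y v.
Proof. by rewrite /dotR -big_split; apply: eq_bigr => i _; rewrite mxE mulrDl. Qed.

Lemma dotRNl x v : dotR (- x) v = - dotR x v.
Proof. by rewrite /dotR -sumrN; apply: eq_bigr => i _; rewrite mxE mulNr. Qed.

Lemma dotRZl a x v : dotR (a *: x) v = a * dotR x v.
Proof. by rewrite /dotR mulr_sumr; apply: eq_bigr => i _; rewrite mxE mulrA. Qed.

Lemma dotR_suml m (F : 'I_m -> 'cV[R]_n) v :
  dotR (\sum_(i < m) F i) v = \sum_(i < m) dotR (F i) v.
Proof.
rewrite /dotR exchange_big /=; apply: eq_bigr => i _.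
by rewrite summxE mulr_suml.
Qed.

Lemma dotR_mx u v : dotR u v = (u^T *m v) 0 0.
Proof. by rewrite mxE; apply: eq_bigr => i _; rewrite mxE. Qed.

Lemma dotR_ge0 u : 0 <= dotR u u.
Proof. by apply: sumr_ge0 => i _; rewrite -expr2 sqr_ge0. Qed.

Lemma normR_ge0 u : 0 <= normR u.
Proof. exact: sqrtr_ge0. Qed.

Lemma normR_sqr u : normR u ^+ 2 = dotR u u.
Proof. by rewrite sqr_sqrtr // dotR_ge0. Qed.

Lemma normR_triangle u v : normR (u + v) <= normR u + normR v.
Proof.
rewrite /normR.
have -> : dotR (u + v) (u + v) = dotR u u + 2 * dotR u v + dotR v v.
  rewrite /dotR mulr_sumr -!big_split; apply: eq_bigr => i _; rewrite !mxE /=; ring.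
apply: (@mink R); rewrite ?dotR_ge0 // => s t.
have -> : dotR u u * s ^+ 2 + 2 * dotR u v * s * t + dotR v v * t ^+ 2
  = dotR (s *: u + t *: v) (s *: u + t *: v).
  have -> : dotR (s *: u + t *: v) (s *: u + t *: v) =
    s ^+ 2 * dotR u u + 2 * s * t * dotR u v + t ^+ 2 * dotR v v.
    rewrite /dotR !mulr_sumr -!big_split; apply: eq_bigr => i _; rewrite !mxE /=; ring.
  ring.
exact: dotR_ge0.
Qed.

Lemma normRZ a u : normR (a *: u) = `|a| * normR u.
Proof.
rewrite /normR dotRZl dotRC dotRZl mulrA -expr2 sqrtrM ?sqr_ge0 //.
by rewrite sqrtr_sqr.
Qed.

Lemma normR_sum m (F : 'I_m -> 'cV[R]_n) :
  normR (\sum_(i < m) F i) <= \sum_(i < m) normR (F i).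
Proof.
elim/big_rec2: _ => [|i y1 y2 _ H].
  by rewrite /normR /dotR big1 ?sqrtr0 // => i _; rewrite mxE mul0r.
by apply: le_trans (normR_triangle _ _) _; rewrite lerD2l.
Qed.

End RealLemmas.

Section RealOrtho.
Variables (R : realType) (n : nat) (psi : 'I_n -> 'cV[R]_n).
Hypothesis ortho : orthonormalR psi.

Lemma coefR (d : 'I_n -> R) j :
  dotR (\sum_(k < n) d k *: psi k) (psi j) = d j.
Proof.
rewrite dotR_suml (bigD1 j) //= big1 ?addr0 => [|k kj].
  by rewrite dotRZl ortho eqxx mulr1.
by rewrite dotRZl ortho (negbTE kj) mulr0.
Qed.

Lemma normR_comb (d : 'I_n -> R) :
  normR (\sum_(k < n) d k *: psi k) = Num.sqrt (\sum_(k < n) d k ^+ 2).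
Proof.
rewrite /normR {1}dotR_suml; congr Num.sqrt; apply: eq_bigr => k _.
by rewrite dotRZl dotRC coefR expr2.
Qed.

Lemma expandR v : v = \sum_(k < n) dotR v (psi k) *: psi k.
Proof.
pose P := \matrix_(i, k) psi k i 0 : 'M[R]_n.
have PtP : P^T *m P = 1%:M.
  apply/matrixP => j k; rewrite !mxE -ortho /dotR.
  by apply: eq_bigr => i _; rewrite !mxE.
have PPt := mulmx1C PtP.
apply/matrixP => i j; rewrite (ord1 j).
have -> : v i 0 = ((P *m P^T) *m v) i 0 by rewrite PPt mul1mx.
rewrite -mulmxA mxE summxE; apply: eq_bigr => k _.
rewrite !mxE mulrC; congr (_ * _).
by rewrite /dotR; apply: eq_bigr => l _; rewrite !mxE mulrC.
Qed.

End RealOrtho.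

Lemma is_derive_mulc (R : realType) (f : R -> R) (x d c : R) :
  is_derive x 1 f d -> is_derive x 1 (fun s => f s * c) (d * c).
Proof.
move=> hf.
have := is_deriveM hf (is_derive_cst c x 1).
move=> H; apply: is_derive_eq.
change (f x * 0 + c * d = d * c); ring.
Qed.

Section RealODE.
Variables (R : realType) (n : nat) (A : 'M[R]_n) (lam : 'I_n -> R)
  (psi : 'I_n -> 'cV[R]_n).
Hypothesis sa : selfadjointR A.
Hypothesis eig : forall k, A *m psi k = lam k *: psi k.

Lemma dotR_selfadj (M : 'M[R]_n) : M^T = M -> forall u v,
  dotR (M *m u) v = dotR u (M *m v).
Proof. by move=> sM u v; rewrite !dotR_mx trmx_mul sM mulmxA. Qed.

Lemma coef_ode (delta T : R) phi w k :
  cauchy_solR A delta T phi w -> forall t, 0 <= t <= T ->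
  dotR (w t) (psi k) = expR (- ((lam k - delta) * t)) * dotR phi (psi k).
Proof.
move=> [w0 [wc wd]] t tT.
rewrite -w0.
apply: (@ode_uniq R (fun t => dotR (w t) (psi k)) (lam k - delta) T) => //.
  rewrite /dotR.
  apply: (@within_continuous_sum R _ n (fun i t => w t i 0 * psi k i 0)) => i.
  apply: within_continuousM; [exact: wc | exact: within_continuous_cst].
move=> s sT.
have := is_derive_sum (h := fun i s => w s i 0 * psi k i 0)
   (fun i => @is_derive_mulc R _ _ _ (psi k i 0) (wd s sT i)).
rewrite fct_sumE => H; apply: is_derive_eq.
have sA : (A - delta%:M)^T = A - delta%:M by rewrite linearB /= tr_scalar_mx sa.
transitivity (- dotR ((A - delta%:M) *m w s) (psi k)).
  by rewrite /dotR -sumrN; apply: eq_bigr => i _; rewrite mulNr.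
rewrite dotR_selfadj // mulmxBl eig mul_scalar_mx -scalerBl dotRC dotRZl dotRC.
by [].
Qed.

End RealODE.

Lemma real_case :
  (forall (R : realType) (n : nat) (A : 'M[R]_n.+1)
     (lam : 'I_n.+1 -> R) (psi : 'I_n.+1 -> 'cV[R]_n.+1)
     (f : R -> R) (m : nat) (a b : 'I_m -> R) (eps eps0 : R)
     (phi : 'cV[R]_n.+1) (w wt : R -> 'cV[R]_n.+1),
     selfadjointR A ->
     orthonormalR psi ->
     (forall k, A *m psi k = lam k *: psi k) ->
     (forall j k : 'I_n.+1, (j <= k)%N -> lam j <= lam k) ->
     0 < lam ord0 ->
     (forall x, lam ord0 <= x <= lam ord_max -> f x != 0) ->
     (forall k, 0 < f (lam k)) ->
     (0 < m)%N ->
     (forall i, 0 < a i) -> (forall i, 0 < b i) ->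
     (forall x, lam ord0 <= x <= lam ord_max ->
        `|rexp a b x - (f x)^-1| <= eps) ->
     cauchy_solR A (lam ord0) (maxb b) phi w ->
     0 <= eps0 ->
     (forall t, 0 < t <= maxb b -> normR (wt t - w t) <= eps0 * normR phi) ->
     let delta := lam ord0 in
     let u := specR (fun x => (f x)^-1) lam psi phi in
     let uhat := \sum_(i < m) (a i * expR (- (b i * delta))) *: wt (b i) in
     normR (uhat - u) <= (eps + eps0 * ((f delta)^-1 + eps)) * normR phi).
Proof.
move=> R n A lam psi f m a b eps eps0 phi w wt sa ortho eig mono lam0 fnz fpos
  m0 apos bpos rapprox cs eps00 wtb; cbv zeta.
set delta := lam ord0.
set u := specR _ _ _ _.
set uhat := \sum_(i < m) _.
set g := fun x => (f x)^-1.
set c := fun k => dotR phi (psi k).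
set al := fun i => a i * expR (- (b i * delta)).
have lamb : forall k, lam ord0 <= lam k <= lam ord_max.
  by move=> k; rewrite !mono // -ltnS.
have bT : forall i, 0 <= b i <= maxb b.
  by move=> i; rewrite ltW //=; apply: le_bigmax.
have dd : lam ord0 <= delta <= lam ord_max by apply: lamb.
have eps_ge0 : 0 <= eps := le_trans (normr_ge0 _) (rapprox _ dd).
have rdelta : rexp a b delta <= g delta + eps.
  by have := rapprox _ dd; rewrite ler_norml => /andP[_]; rewrite lerBlDl addrC.
have hw : forall i, w (b i) =
    \sum_(k < n.+1) (expR (- ((lam k - delta) * b i)) * c k) *: psi k.
  move=> i; rewrite {1}(expandR ortho (w (b i))); apply: eq_bigr => k _.
  by rewrite (coef_ode sa eig k cs) ?bT.
have key : \sum_(i < m) al i *: w (b i) - u =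
    \sum_(k < n.+1) ((rexp a b (lam k) - g (lam k)) * c k) *: psi k.
  have -> : \sum_(i < m) al i *: w (b i) =
      \sum_(k < n.+1) (rexp a b (lam k) * c k) *: psi k.
    under eq_bigr => i _ do rewrite hw scaler_sumr.
    rewrite exchange_big /=; apply: eq_bigr => k _.
    rewrite /rexp mulr_suml scaler_suml; apply: eq_bigr => i _.
    rewrite scalerA; congr (_ *: _); rewrite /al.
    rewrite mulrA -[a i * _ * _]mulrA -expRD; congr (_ * expR _ * _); ring.
  rewrite /u /specR -/c -sumrB; apply: eq_bigr => k _.
  by rewrite -scalerBl mulrBl.
have split : uhat - u = \sum_(i < m) al i *: (wt (b i) - w (b i)) +
    (\sum_(i < m) al i *: w (b i) - u).
  under eq_bigr => i _ do rewrite scalerBr.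
  by rewrite sumrB addrA subrK.
have Nphi : normR phi = Num.sqrt (\sum_(k < n.+1) c k ^+ 2).
  by rewrite {1}(expandR ortho phi) normR_comb.
have N0 := normR_ge0 phi.
have first : normR (\sum_(i < m) al i *: (wt (b i) - w (b i))) <=
    (g delta + eps) * (eps0 * normR phi).
  apply: le_trans (normR_sum _) _.
  apply: le_trans (_ : \sum_(i < m) al i * (eps0 * normR phi) <= _).
    apply: ler_sum => i _; rewrite normRZ.
    have al0 : 0 <= al i by rewrite /al mulr_ge0 ?expR_ge0 // ltW.
    rewrite ger0_norm //; apply: ler_wpM2l => //; apply: wtb.
    by rewrite bpos; case/andP: (bT i).
  rewrite -mulr_suml; apply: ler_wpM2r; first by rewrite mulr_ge0.
  exact: rdelta.
have second : normR (\sum_(i < m) al i *: w (b i) - u) <= eps * normR phi.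
  rewrite key normR_comb // Nphi -(ger0_norm eps_ge0) -sqrtr_sqr -sqrtrM ?sqr_ge0 //.
  apply: ler_wsqrtr; rewrite mulr_sumr; apply: ler_sum => k _.
  rewrite exprMn; apply: ler_wpM2r; first exact: sqr_ge0.
  have := rapprox _ (lamb k); rewrite ler_norml => /andP[h1 h2]; rewrite /g; nra.
rewrite split; apply: le_trans (normR_triangle _ _) _.
have := lerD first second; rewrite /g; move=> H; apply: le_trans H _.
rewrite le_eqVlt; apply/orP; left; apply/eqP; ring.
Qed.


Section CBasics.
Variable R : realType.
Implicit Types x y : R[i].

Lemma ReD x y : complex.Re (x + y) = complex.Re x + complex.Re y.
Proof. by case: x; case: y. Qed.
Lemma ImD x y : complex.Im (x + y) = complex.Im x + complex.Im y.
Proof. by case: x; case: y. Qed.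
Lemma ReN x : complex.Re (- x) = - complex.Re x.
Proof. by case: x. Qed.
Lemma ImN x : complex.Im (- x) = - complex.Im x.
Proof. by case: x. Qed.
Lemma ReM x y : complex.Re (x * y) = complex.Re x * complex.Re y - complex.Im x * complex.Im y.
Proof. by case: x; case: y. Qed.
Lemma ImM x y : complex.Im (x * y) = complex.Re x * complex.Im y + complex.Im x * complex.Re y.
Proof. by case: x => a b; case: y => c d /=. Qed.
Lemma ReJ x : complex.Re (conjc x) = complex.Re x.
Proof. by case: x. Qed.
Lemma ImJ x : complex.Im (conjc x) = - complex.Im x.
Proof. by case: x. Qed.
Lemma ReC (a b : R) : complex.Re (Complex a b) = a. Proof. by []. Qed.
Lemma ImC (a b : R) : complex.Im (Complex a b) = b. Proof. by []. Qed.
Lemma ReSum m (F : 'I_m -> R[i]) : complex.Re (\sum_(i < m) F i) = \sum_(i < m) complex.Re (F i).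
Proof. by apply: (big_morph _ ReD). Qed.
Lemma ImSum m (F : 'I_m -> R[i]) : complex.Im (\sum_(i < m) F i) = \sum_(i < m) complex.Im (F i).
Proof. by apply: (big_morph _ ImD). Qed.
Lemma complex_eta x : x = Complex (complex.Re x) (complex.Im x).
Proof. by case: x. Qed.
Lemma conjcM x y : conjc (x * y) = conjc x * conjc y.
Proof. exact: rmorphM. Qed.
Lemma conjc_sum m (F : 'I_m -> R[i]) : conjc (\sum_(i < m) F i) = \sum_(i < m) conjc (F i).
Proof. exact: rmorph_sum. Qed.
Lemma conjcR (a : R) : conjc (Complex a 0) = Complex a 0.
Proof. by rewrite /= oppr0. Qed.
End CBasics.

Section CDot.
Variables (R : realType) (n : nat).
Implicit Types (u v x y : 'cV[R[i]]_n).

Lemma ReDotC u v : complex.Re (dotC u v) =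
  \sum_(i < n) (complex.Re (u i 0) * complex.Re (v i 0) + complex.Im (u i 0) * complex.Im (v i 0)).
Proof. by rewrite /dotC ReSum; apply: eq_bigr => i _; rewrite ReM ReJ ImJ; ring. Qed.

Lemma ImDotC u v : complex.Im (dotC u v) =
  \sum_(i < n) (complex.Im (u i 0) * complex.Re (v i 0) - complex.Re (u i 0) * complex.Im (v i 0)).
Proof. by rewrite /dotC ImSum; apply: eq_bigr => i _; rewrite ImM ReJ ImJ; ring. Qed.

Lemma dotCDl x y v : dotC (x + y) v = dotC x v + dotC y v.
Proof. by rewrite /dotC -big_split; apply: eq_bigr => i _; rewrite mxE mulrDl. Qed.

Lemma dotCNl x v : dotC (- x) v = - dotC x v.
Proof. by rewrite /dotC -sumrN; apply: eq_bigr => i _; rewrite mxE mulNr. Qed.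

Lemma dotCZl a x v : dotC (a *: x) v = a * dotC x v.
Proof. by rewrite /dotC mulr_sumr; apply: eq_bigr => i _; rewrite mxE mulrA. Qed.

Lemma dotC_suml m (F : 'I_m -> 'cV[R[i]]_n) v :
  dotC (\sum_(i < m) F i) v = \sum_(i < m) dotC (F i) v.
Proof.
rewrite /dotC exchange_big /=; apply: eq_bigr => i _.
by rewrite summxE mulr_suml.
Qed.

Lemma dotC_conj u v : dotC u v = conjc (dotC v u).
Proof.
rewrite /dotC conjc_sum; apply: eq_bigr => i _.
by rewrite conjcM conjcK mulrC.
Qed.

Lemma dotCZr a u v : dotC u (a *: v) = conjc a * dotC u v.
Proof. by rewrite dotC_conj dotCZl conjcM -dotC_conj. Qed.

Lemma dotC_mx u v : dotC u v = ((map_mx conjc v)^T *m u) 0 0.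
Proof. by rewrite mxE; apply: eq_bigr => i _; rewrite !mxE mulrC. Qed.

Lemma dotC_selfadj (M : 'M[R[i]]_n) : map_mx conjc M^T = M -> forall u v,
  dotC (M *m u) v = dotC u (M *m v).
Proof.
move=> sM u v; rewrite !dotC_mx map_mxM trmx_mul.
have E : (map_mx conjc M)^T = M by rewrite map_trmx; exact: sM.
by rewrite E mulmxA.
Qed.

Lemma ReDotC_ge0 u : 0 <= complex.Re (dotC u u).
Proof. by rewrite ReDotC; apply: sumr_ge0 => i _; rewrite addr_ge0 // -expr2 sqr_ge0. Qed.

Lemma normC_ge0 u : 0 <= normC u.
Proof. exact: sqrtr_ge0. Qed.

Lemma normC_triangle u v : normC (u + v) <= normC u + normC v.
Proof.
rewrite /normC.
have -> : complex.Re (dotC (u + v) (u + v)) =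
    complex.Re (dotC u u) + 2 * complex.Re (dotC u v) + complex.Re (dotC v v).
  rewrite !ReDotC mulr_sumr -!big_split; apply: eq_bigr => i _.
  rewrite !mxE /= !ReD !ImD; ring.
apply: (@mink R); rewrite ?ReDotC_ge0 // => s t.
have -> : complex.Re (dotC u u) * s ^+ 2 + 2 * complex.Re (dotC u v) * s * t +
    complex.Re (dotC v v) * t ^+ 2
  = complex.Re (dotC (Complex s 0 *: u + Complex t 0 *: v) (Complex s 0 *: u + Complex t 0 *: v)).
  have -> : complex.Re (dotC (Complex s 0 *: u + Complex t 0 *: v) (Complex s 0 *: u + Complex t 0 *: v)) =
    s ^+ 2 * complex.Re (dotC u u) + 2 * s * t * complex.Re (dotC u v) + t ^+ 2 * complex.Re (dotC v v).
    rewrite !ReDotC !mulr_sumr -!big_split; apply: eq_bigr => i _.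
    rewrite !mxE /= !ReD !ImD !ReM !ImM /=; ring.
  ring.
exact: ReDotC_ge0.
Qed.

Lemma normCZ a u : normC (Complex a 0 *: u) = `|a| * normC u.
Proof.
rewrite /normC dotCZl dotCZr conjcR mulrA ReM /= mul0r subr0.
rewrite mulr0 mul0r addr0 mul0r subr0 -expr2 sqrtrM ?sqr_ge0 //.
by rewrite sqrtr_sqr.
Qed.

Lemma normC_sum m (F : 'I_m -> 'cV[R[i]]_n) :
  normC (\sum_(i < m) F i) <= \sum_(i < m) normC (F i).
Proof.
elim/big_rec2: _ => [|i y1 y2 _ H].
  by rewrite /normC /dotC big1 ?sqrtr0 // => i _; rewrite mxE mul0r.
by apply: le_trans (normC_triangle _ _) _; rewrite lerD2l.
Qed.

End CDot.

Section COrtho.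
Variables (R : realType) (n : nat) (psi : 'I_n -> 'cV[R[i]]_n).
Hypothesis ortho : orthonormalC psi.

Lemma coefC (d : 'I_n -> R[i]) j :
  dotC (\sum_(k < n) d k *: psi k) (psi j) = d j.
Proof.
rewrite dotC_suml (bigD1 j) //= big1 ?addr0 => [|k kj].
  by rewrite dotCZl ortho eqxx mulr1.
by rewrite dotCZl ortho (negbTE kj) mulr0.
Qed.

Lemma normC_comb (d : 'I_n -> R[i]) :
  normC (\sum_(k < n) d k *: psi k) =
  Num.sqrt (\sum_(k < n) (complex.Re (d k) ^+ 2 + complex.Im (d k) ^+ 2)).
Proof.
rewrite /normC {1}dotC_suml ReSum; congr Num.sqrt; apply: eq_bigr => k _.
rewrite dotCZl dotC_conj coefC ReM ReJ ImJ; ring.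
Qed.

Lemma expandC v : v = \sum_(k < n) dotC v (psi k) *: psi k.
Proof.
pose P := \matrix_(i, k) psi k i 0 : 'M[R[i]]_n.
have PtP : (map_mx conjc P)^T *m P = 1%:M.
  apply/matrixP => j k; rewrite !mxE eq_sym -ortho /dotC.
  by apply: eq_bigr => i _; rewrite !mxE mulrC.
have PPt := mulmx1C PtP.
apply/matrixP => i j; rewrite (ord1 j).
have -> : v i 0 = ((P *m (map_mx conjc P)^T) *m v) i 0 by rewrite PPt mul1mx.
rewrite -mulmxA mxE summxE; apply: eq_bigr => k _.
rewrite !mxE mulrC; congr (_ * _).
by rewrite /dotC; apply: eq_bigr => l _; rewrite !mxE mulrC.
Qed.

End COrtho.

Lemma complexB_real (R : realType) (a b : R) : Complex a 0 - Complex b 0 = Complex (a - b) 0 :> R[i].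
Proof. by rewrite [LHS]complex_eta ReD ImD ReN ImN /= oppr0 addr0. Qed.

Section CODE.
Variables (R : realType) (n : nat) (A : 'M[R[i]]_n) (lam : 'I_n -> R)
  (psi : 'I_n -> 'cV[R[i]]_n).
Hypothesis sa : selfadjointC A.
Hypothesis eig : forall k, A *m psi k = (Complex (lam k) 0) *: psi k.

Lemma coef_odeC (delta T : R) phi w k :
  cauchy_solC A delta T phi w -> forall t, 0 <= t <= T ->
  dotC (w t) (psi k) = Complex (expR (- ((lam k - delta) * t))) 0 * dotC phi (psi k).
Proof.
move=> [w0 [wcR [wcI wd]]] t tT.
set mu := lam k - delta.
set M := A - (Complex delta 0)%:M.
have sM : map_mx conjc M^T = M.
  rewrite /M linearB /= tr_scalar_mx map_mxB /= map_scalar_mx /=.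
  by rewrite oppr0 sa.
have key : forall s, dotC (- (M *m w s)) (psi k) = - (Complex mu 0 * dotC (w s) (psi k)).
  move=> s; rewrite dotCNl dotC_selfadj // /M mulmxBl eig mul_scalar_mx -scalerBl.
  by rewrite dotCZr complexB_real conjcR.
have hRe : complex.Re (dotC (w t) (psi k)) = expR (- (mu * t)) * complex.Re (dotC (w 0) (psi k)).
  apply: (@ode_uniq R (fun s => complex.Re (dotC (w s) (psi k))) mu T) => //.
    have -> : (fun s => complex.Re (dotC (w s) (psi k))) = fun s =>
      \sum_(i < n) (complex.Re (w s i 0) * complex.Re (psi k i 0) + complex.Im (w s i 0) * complex.Im (psi k i 0)).
      by apply: funext => s; rewrite ReDotC.
    apply: (@within_continuous_sum R _ n (fun i s => complex.Re (w s i 0) * complex.Re (psi k i 0) + complex.Im (w s i 0) * complex.Im (psi k i 0))) => i.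
    apply: within_continuousD; apply: within_continuousM;
      [exact: wcR | exact: within_continuous_cst | exact: wcI | exact: within_continuous_cst].
  move=> s sT.
  have := is_derive_sum (h := fun i s => complex.Re (w s i 0) * complex.Re (psi k i 0) + complex.Im (w s i 0) * complex.Im (psi k i 0))
    (fun i => is_deriveD (@is_derive_mulc R _ _ _ (complex.Re (psi k i 0)) (wd s sT i).1)
                         (@is_derive_mulc R _ _ _ (complex.Im (psi k i 0)) (wd s sT i).2)).
  rewrite fct_sumE => H.
  have E : (fun s => complex.Re (dotC (w s) (psi k))) = fun s =>
      \sum_(i < n) (complex.Re (w s i 0) * complex.Re (psi k i 0) + complex.Im (w s i 0) * complex.Im (psi k i 0)).
    by apply: funext => x; rewrite ReDotC.
  rewrite E; apply: is_derive_eq.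
  transitivity (complex.Re (dotC (- (M *m w s)) (psi k))).
    by rewrite ReDotC; apply: eq_bigr => i _; rewrite !mxE.
  by rewrite key ReN ReM /= mul0r subr0.
have ImE : forall s, complex.Im (dotC (w s) (psi k)) =
    \sum_(i < n) (complex.Im (w s i 0) * complex.Re (psi k i 0) + complex.Re (w s i 0) * (- complex.Im (psi k i 0))).
  by move=> s; rewrite ImDotC; apply: eq_bigr => i _; ring.
have hIm : complex.Im (dotC (w t) (psi k)) = expR (- (mu * t)) * complex.Im (dotC (w 0) (psi k)).
  apply: (@ode_uniq R (fun s => complex.Im (dotC (w s) (psi k))) mu T) => //.
    have -> : (fun s => complex.Im (dotC (w s) (psi k))) = fun s =>
      \sum_(i < n) (complex.Im (w s i 0) * complex.Re (psi k i 0) + complex.Re (w s i 0) * (- complex.Im (psi k i 0))).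
      by apply: funext => s; rewrite ImE.
    apply: (@within_continuous_sum R _ n (fun i s => complex.Im (w s i 0) * complex.Re (psi k i 0) + complex.Re (w s i 0) * (- complex.Im (psi k i 0)))) => i.
    apply: within_continuousD; apply: within_continuousM;
      [exact: wcI | exact: within_continuous_cst | exact: wcR | exact: within_continuous_cst].
  move=> s sT.
  have := is_derive_sum (h := fun i s => complex.Im (w s i 0) * complex.Re (psi k i 0) + complex.Re (w s i 0) * (- complex.Im (psi k i 0)))
    (fun i => is_deriveD (@is_derive_mulc R _ _ _ (complex.Re (psi k i 0)) (wd s sT i).2)
                         (@is_derive_mulc R _ _ _ (- complex.Im (psi k i 0)) (wd s sT i).1)).
  rewrite fct_sumE => H.
  have E : (fun s => complex.Im (dotC (w s) (psi k))) = fun s =>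
      \sum_(i < n) (complex.Im (w s i 0) * complex.Re (psi k i 0) + complex.Re (w s i 0) * (- complex.Im (psi k i 0))).
    by apply: funext => x; rewrite ImE.
  rewrite E; apply: is_derive_eq.
  transitivity (complex.Im (dotC (- (M *m w s)) (psi k))).
    by rewrite ImDotC; apply: eq_bigr => i _; rewrite !mxE; ring.
  by rewrite key ImN ImM /= mul0r addr0.
rewrite -w0 [LHS]complex_eta hRe hIm [RHS]complex_eta ReM ImM /=.
by rewrite !mul0r subr0 addr0.
Qed.

End CODE.

Lemma complexM_real (R : realType) (a b : R) : Complex a 0 * Complex b 0 = Complex (a * b) 0 :> R[i].
Proof. by rewrite [LHS]complex_eta ReM ImM /= !mul0r !mulr0 subr0 addr0. Qed.

Lemma complex_sum_real (R : realType) m (F : 'I_m -> R) :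
  \sum_(i < m) Complex (F i) 0 = Complex (\sum_(i < m) F i) 0 :> R[i].
Proof. by rewrite [LHS]complex_eta ReSum ImSum /= big1_eq. Qed.

Lemma complex_case :
  (forall (R : realType) (n : nat) (A : 'M[R[i]]_n.+1)
     (lam : 'I_n.+1 -> R) (psi : 'I_n.+1 -> 'cV[R[i]]_n.+1)
     (f : R -> R) (m : nat) (a b : 'I_m -> R) (eps eps0 : R)
     (phi : 'cV[R[i]]_n.+1) (w wt : R -> 'cV[R[i]]_n.+1),
     selfadjointC A ->
     orthonormalC psi ->
     (forall k, A *m psi k = (Complex (lam k) 0) *: psi k) ->
     (forall j k : 'I_n.+1, (j <= k)%N -> lam j <= lam k) ->
     0 < lam ord0 ->
     (forall x, lam ord0 <= x <= lam ord_max -> f x != 0) ->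
     (forall k, 0 < f (lam k)) ->
     (0 < m)%N ->
     (forall i, 0 < a i) -> (forall i, 0 < b i) ->
     (forall x, lam ord0 <= x <= lam ord_max ->
        `|rexp a b x - (f x)^-1| <= eps) ->
     cauchy_solC A (lam ord0) (maxb b) phi w ->
     0 <= eps0 ->
     (forall t, 0 < t <= maxb b -> normC (wt t - w t) <= eps0 * normC phi) ->
     let delta := lam ord0 in
     let u := specC (fun x => (f x)^-1) lam psi phi in
     let uhat := \sum_(i < m) (Complex (a i * expR (- (b i * delta))) 0) *: wt (b i) in
     normC (uhat - u) <= (eps + eps0 * ((f delta)^-1 + eps)) * normC phi).
Proof.
move=> R n A lam psi f m a b eps eps0 phi w wt sa ortho eig mono lam0 fnz fpos
  m0 apos bpos rapprox cs eps00 wtb; cbv zeta.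
set delta := lam ord0.
set u := specC _ _ _ _.
set uhat := \sum_(i < m) _.
set g := fun x => (f x)^-1.
set c := fun k => dotC phi (psi k).
set al := fun i => a i * expR (- (b i * delta)).
have lamb : forall k, lam ord0 <= lam k <= lam ord_max.
  by move=> k; rewrite !mono // -ltnS.
have bT : forall i, 0 <= b i <= maxb b.
  by move=> i; rewrite ltW //=; apply: le_bigmax.
have dd : lam ord0 <= delta <= lam ord_max by apply: lamb.
have eps_ge0 : 0 <= eps := le_trans (normr_ge0 _) (rapprox _ dd).
have rdelta : rexp a b delta <= g delta + eps.
  by have := rapprox _ dd; rewrite ler_norml => /andP[_]; rewrite lerBlDl addrC.
have hw : forall i, w (b i) =
    \sum_(k < n.+1) (Complex (expR (- ((lam k - delta) * b i))) 0 * c k) *: psi k.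
  move=> i; rewrite {1}(expandC ortho (w (b i))); apply: eq_bigr => k _.
  by rewrite (coef_odeC sa eig k cs) ?bT.
have key : \sum_(i < m) Complex (al i) 0 *: w (b i) - u =
    \sum_(k < n.+1) (Complex (rexp a b (lam k) - g (lam k)) 0 * c k) *: psi k.
  have -> : \sum_(i < m) Complex (al i) 0 *: w (b i) =
      \sum_(k < n.+1) (Complex (rexp a b (lam k)) 0 * c k) *: psi k.
    under eq_bigr => i _ do rewrite hw scaler_sumr.
    rewrite exchange_big /=; apply: eq_bigr => k _.
    under eq_bigr => i _ do rewrite scalerA mulrA complexM_real.
    rewrite -scaler_suml; congr (_ *: _).
    rewrite -mulr_suml complex_sum_real; congr (Complex _ _ * _).
    rewrite /rexp; apply: eq_bigr => i _; rewrite /al.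
    rewrite -mulrA -expRD; congr (_ * expR _); ring.
  rewrite /u /specC -/c -sumrB; apply: eq_bigr => k _.
  by rewrite -scalerBl -mulrBl complexB_real.
have split : uhat - u = \sum_(i < m) Complex (al i) 0 *: (wt (b i) - w (b i)) +
    (\sum_(i < m) Complex (al i) 0 *: w (b i) - u).
  under eq_bigr => i _ do rewrite scalerBr.
  by rewrite sumrB addrA subrK.
have Nphi : normC phi = Num.sqrt (\sum_(k < n.+1) (complex.Re (c k) ^+ 2 + complex.Im (c k) ^+ 2)).
  by rewrite {1}(expandC ortho phi) normC_comb.
have N0 := normC_ge0 phi.
have first : normC (\sum_(i < m) Complex (al i) 0 *: (wt (b i) - w (b i))) <=
    (g delta + eps) * (eps0 * normC phi).
  apply: le_trans (normC_sum _) _.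
  apply: le_trans (_ : \sum_(i < m) al i * (eps0 * normC phi) <= _).
    apply: ler_sum => i _; rewrite normCZ.
    have al0 : 0 <= al i by rewrite /al mulr_ge0 ?expR_ge0 // ltW.
    rewrite ger0_norm //; apply: ler_wpM2l => //; apply: wtb.
    by rewrite bpos; case/andP: (bT i).
  rewrite -mulr_suml; apply: ler_wpM2r; first by rewrite mulr_ge0.
  exact: rdelta.
have second : normC (\sum_(i < m) Complex (al i) 0 *: w (b i) - u) <= eps * normC phi.
  rewrite key normC_comb // Nphi -(ger0_norm eps_ge0) -sqrtr_sqr -sqrtrM ?sqr_ge0 //.
  apply: ler_wsqrtr; rewrite mulr_sumr; apply: ler_sum => k _.
  rewrite ReM ImM /= !mul0r subr0 addr0 !exprMn -mulrDr.
  apply: ler_wpM2r; first by rewrite addr_ge0 ?sqr_ge0.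
  have := rapprox _ (lamb k); rewrite ler_norml => /andP[h1 h2]; rewrite /g; nra.
rewrite split; apply: le_trans (normC_triangle _ _) _.
have := lerD first second; rewrite /g; move=> H; apply: le_trans H _.
rewrite le_eqVlt; apply/orP; left; apply/eqP; ring.
Qed.

Unset Implicit Arguments.

Theorem theorem2 :
  (* real Hilbert space H = R^(n+1) *)
  (forall (R : realType) (n : nat) (A : 'M[R]_n.+1)
     (lam : 'I_n.+1 -> R) (psi : 'I_n.+1 -> 'cV[R]_n.+1)
     (f : R -> R) (m : nat) (a b : 'I_m -> R) (eps eps0 : R)
     (phi : 'cV[R]_n.+1) (w wt : R -> 'cV[R]_n.+1),
     selfadjointR A ->
     orthonormalR psi ->
     (forall k, A *m psi k = lam k *: psi k) ->
     (forall j k : 'I_n.+1, (j <= k)%N -> lam j <= lam k) ->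
     0 < lam ord0 ->
     (forall x, lam ord0 <= x <= lam ord_max -> f x != 0) ->
     (forall k, 0 < f (lam k)) ->
     (0 < m)%N ->
     (forall i, 0 < a i) -> (forall i, 0 < b i) ->
     (forall x, lam ord0 <= x <= lam ord_max ->
        `|rexp a b x - (f x)^-1| <= eps) ->
     cauchy_solR A (lam ord0) (maxb b) phi w ->
     0 <= eps0 ->
     (forall t, 0 < t <= maxb b -> normR (wt t - w t) <= eps0 * normR phi) ->
     let delta := lam ord0 in
     let u := specR (fun x => (f x)^-1) lam psi phi in
     let uhat := \sum_(i < m) (a i * expR (- (b i * delta))) *: wt (b i) in
     normR (uhat - u) <= (eps + eps0 * ((f delta)^-1 + eps)) * normR phi)
  /\
  (* complex Hilbert space H = C^(n+1), C = R[i] *)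
  (forall (R : realType) (n : nat) (A : 'M[R[i]]_n.+1)
     (lam : 'I_n.+1 -> R) (psi : 'I_n.+1 -> 'cV[R[i]]_n.+1)
     (f : R -> R) (m : nat) (a b : 'I_m -> R) (eps eps0 : R)
     (phi : 'cV[R[i]]_n.+1) (w wt : R -> 'cV[R[i]]_n.+1),
     selfadjointC A ->
     orthonormalC psi ->
     (forall k, A *m psi k = (Complex (lam k) 0) *: psi k) ->
     (forall j k : 'I_n.+1, (j <= k)%N -> lam j <= lam k) ->
     0 < lam ord0 ->
     (forall x, lam ord0 <= x <= lam ord_max -> f x != 0) ->
     (forall k, 0 < f (lam k)) ->
     (0 < m)%N ->
     (forall i, 0 < a i) -> (forall i, 0 < b i) ->
     (forall x, lam ord0 <= x <= lam ord_max ->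
        `|rexp a b x - (f x)^-1| <= eps) ->
     cauchy_solC A (lam ord0) (maxb b) phi w ->
     0 <= eps0 ->
     (forall t, 0 < t <= maxb b -> normC (wt t - w t) <= eps0 * normC phi) ->
     let delta := lam ord0 in
     let u := specC (fun x => (f x)^-1) lam psi phi in
     let uhat := \sum_(i < m) (Complex (a i * expR (- (b i * delta))) 0) *: wt (b i) in
     normC (uhat - u) <= (eps + eps0 * ((f delta)^-1 + eps)) * normC phi).
Proof.
split; [exact: real_case | exact: complex_case].
Qed.
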